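(* Let $B$ be a finite set with $|B|\ge 2$ and let $f$ be an $\mathsf{E}$-shop on $B$, with $b\in B$ such that $b\in f(x)$ for all $x\in B$. Then $\langle f\rangle$ contains an $\mathsf{E}$-shop $g$ for which there is a partition of $B$ into sets $B',B''$ with $B'$ non-empty such that (1) $g(x)\supseteq\{x,b\}$ for all $x\in B'$; (2) $g(x)\supseteq\{b\}$ for all $x\in B''$; (3) for every $y\in B$ there exists $x\in B'$ with $y\in g(x)$.
   Context: A shop on $B$ is a map $f:B\to\mathcal{P}(B)\setminus\{\emptyset\}$ such that every $y\in B$ lies in $f(x)$ for some $x\in B$. An $\mathsf{E}$-shop is a shop $f$ for which some $b\in B$ satisfies $b\in f(x)$ for all $x\in B$. The identity shop is $x\mapsto\{x\}$; composition is $(g\circ f)(x)=\{z:\exists y\ (y\in f(x)\wedge z\in g(y))\}$; $f$ is a sub-shop of $g$ if $f(x)\subseteq g(x)$ for all $x$. A down-she-monoid (DSM) on $B$ is a set of shops on $B$ containing the identity, closed under composition and under taking sub-shops (that are shops). $\langle f\rangle$ denotes the smallest DSM containing $f$. *)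

(* Defs.v *)
From mathcomp Require Import all_boot.
Set Implicit Arguments. Unset Strict Implicit. Unset Printing Implicit Defensive.

Section Shops.
Variable B : finType.

Definition is_shop (f : B -> {set B}) : Prop :=
  (forall x, f x != set0) /\ (forall y, exists x, y \in f x).

Definition is_Eshop (f : B -> {set B}) : Prop :=
  is_shop f /\ exists b, forall x, b \in f x.

Definition id_shop : B -> {set B} := fun x => [set x].

Definition shop_comp (g f : B -> {set B}) : B -> {set B} :=
  fun x => [set z | [exists y, (y \in f x) && (z \in g y)]].

Definition sub_shop (f g : B -> {set B}) : Prop := forall x, f x \subset g x.

Definition is_DSM (M : (B -> {set B}) -> Prop) : Prop :=
  (forall f, M f -> is_shop f) /\
  M id_shop /\
  (forall f g, M f -> M g -> M (shop_comp g f)) /\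
  (forall f g, M g -> is_shop f -> sub_shop f g -> M f).

(* <f> : the smallest DSM containing f (intersection of all DSMs containing f). *)
Definition gen_DSM (f : B -> {set B}) : (B -> {set B}) -> Prop :=
  fun g => forall M, is_DSM M -> M f -> M g.

End Shops.

(* Main.v *)
Require Import Defs.
From mathcomp Require Import all_boot.
From mathcomp Require Import zify.
Set Implicit Arguments. Unset Strict Implicit.

Section S.
Variable B : finType.
Variable f : B -> {set B}.

Fixpoint pw (n : nat) : B -> {set B} :=
  match n with 0 => id_shop (B:=B) | n.+1 => shop_comp f (pw n) end.

Lemma pwS n x y : (y \in pw n.+1 x) = [exists z, (z \in pw n x) && (y \in f z)].
Proof. by rewrite /= /shop_comp inE. Qed.

Lemma pw_add m n x y :
  (y \in pw (m + n) x) -> exists2 z, z \in pw m x & y \in pw n z.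
Proof.
elim: n y => [|n IH] y.
  by rewrite addn0 => H; exists y => //=; rewrite /id_shop inE.
rewrite addnS pwS => /existsP[z /andP[Hz Hy]].
have [w Hw Hzw] := IH _ Hz; exists w => //.
by rewrite pwS; apply/existsP; exists z; rewrite Hzw.
Qed.

Lemma shop_comp_shop (g h : B -> {set B}) :
  is_shop h -> is_shop g -> is_shop (shop_comp g h).
Proof.
move=> [h1 h2] [g1 g2]; split.
  move=> x; have [y Hy] := set0Pn _ (h1 x); have [z Hz] := set0Pn _ (g1 y).
  apply/set0Pn; exists z; rewrite /shop_comp inE; apply/existsP; exists y.
  by rewrite Hy Hz.
move=> z; have [y Hy] := g2 z; have [x Hx] := h2 y.
by exists x; rewrite /shop_comp inE; apply/existsP; exists y; rewrite Hx Hy.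
Qed.

Lemma shops_DSM : is_DSM (fun g : B -> {set B} => is_shop g).
Proof.
split; first by [].
split.
  split; first by move=> x; apply/set0Pn; exists x; rewrite /id_shop inE.
  by move=> y; exists y; rewrite /id_shop inE.
split; first by move=> g h Hg Hh; apply: shop_comp_shop.
by [].
Qed.

Lemma pw_gen n : gen_DSM f (pw n).
Proof.
move=> M [_ [Mid [Mc _]]] Mf; elim: n => [|n IH] //=.
exact: Mc.
Qed.

Lemma pw_ext n m : (forall x, pw n x = pw m x) -> forall x, pw n.+1 x = pw m.+1 x.
Proof. by move=> H x; rewrite /= /shop_comp H. Qed.

End S.

Theorem lemma3p6 (B : finType) (f : B -> {set B}) (b : B) :
  1 < #|B| ->
  is_shop f ->
  (forall x, b \in f x) ->
  exists g : B -> {set B},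
    gen_DSM f g /\ is_Eshop g /\
    exists B' B'' : {set B},
      B' :&: B'' = set0 /\ B' :|: B'' = setT /\ B' != set0 /\
      (forall x, x \in B' -> [set x; b] \subset g x) /\
      (forall x, x \in B'' -> [set b] \subset g x) /\
      (forall y, exists2 x, x \in B' & y \in g x).
Proof.
move=> _ Hf Hb.
(* pigeonhole to find i < j with pw i = pw j *)
pose K := #|{ffun B -> {set B}}|.
pose F := fun k : 'I_K.+1 => ([ffun x : B => pw f k x] : {ffun B -> {set B}}).
have : ~~ injectiveb F.
  apply/negP => /injectiveP Hinj; have := leq_card F Hinj.
  by rewrite card_ord ltnn.
move=> /injectivePn [i0 [j0 Hne HF]].
have Heq0 : forall x, pw f i0 x = pw f j0 x.
  by move=> x; have := congr1 (fun h : {ffun B -> {set B}} => h x) HF; rewrite /F !ffunE.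
have [i [j [Hij Heq]]] : exists i j, i < j /\ forall x, pw f i x = pw f j x.
  case: (ltngtP i0 j0) => H.
  - by exists i0, j0.
  - by exists j0, i0; split => // x; rewrite Heq0.
  - by move: Hne; rewrite -(inj_eq val_inj) /= H eqxx.
pose p := j - i.
have Hk : forall k x, pw f (i + k) x = pw f (j + k) x.
  elim=> [|k IH] x; first by rewrite !addn0.
  by rewrite !addnS; apply: pw_ext.
have Hm : forall m k x, pw f (i + k + m * p) x = pw f (i + k) x.
  elim=> [|m IH] k x; first by rewrite mul0n addn0.
  have -> : i + k + m.+1 * p = i + (k + m * p) + p by rewrite mulSn; lia.
  have -> : i + (k + m * p) + p = j + (k + m * p) by rewrite /p; lia.
  by rewrite -Hk addnA IH.
pose N := (i.+1) * p.
have HN : forall x, pw f (N + N) x = pw f N x.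
  move=> x; have -> : N + N = i + (N - i) + i.+1 * p.
    by rewrite /N /p; nia.
  rewrite Hm; congr (pw f _ x); rewrite /N /p; nia.
have HN1 : 0 < N by rewrite /N /p; nia.
pose g := pw f N.
have Gshop : is_shop g := @pw_gen B f N _ (@shops_DSM B) Hf.
have Gb0 : forall n x, b \in pw f n.+1 x.
  elim=> [|n IH] x.
    by rewrite pwS; apply/existsP; exists x; rewrite /= /id_shop inE eqxx Hb.
  by rewrite pwS; apply/existsP; exists b; rewrite IH Hb.
have Gb : forall x, b \in g x by move=> x; rewrite /g -(prednK HN1).
have Gtr0 : forall m n x y z, y \in pw f m x -> z \in pw f n y -> z \in pw f (m + n) x.
  move=> m n x y z Hy; elim: n z => [|n IH] z Hz.
    by rewrite addn0; move: Hz; rewrite /= /id_shop inE => /eqP->.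
  move: Hz; rewrite addnS !pwS => /existsP[w /andP[Hw Hz]].
  by apply/existsP; exists w; rewrite (IH _ Hw) Hz.
have Gtr : forall x y z, y \in g x -> z \in g y -> z \in g x.
  by move=> x y z Hy Hz; rewrite /g -HN; exact: Gtr0 Hy Hz.
have Key : forall y, exists2 x, x \in g x & y \in g x.
  move=> y.
  suff: forall n x, #|[set w | x \in g w]| <= n -> y \in g x ->
          exists2 w, w \in g w & y \in g w.
    by move=> H; have [x Hx] := Gshop.2 y; exact: H _ x (leqnn _) Hx.
  elim=> [|n IH] x Hn Hyx; have [w Hw] := Gshop.2 x.
    by move: Hn; rewrite leqn0 cards_eq0 => /eqP/setP/(_ w); rewrite !inE Hw.
  case Hww: (w \in g w); first by exists w => //; exact: Gtr Hw Hyx.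
  apply: (IH w); last exact: Gtr Hw Hyx.
  rewrite -ltnS; apply: leq_trans Hn; apply: proper_card.
  apply/properP; split.
    by apply/subsetP => u; rewrite !inE => Hu; exact: Gtr Hu Hw.
  by exists w; rewrite !inE ?Hw ?Hww.
exists g; split; first exact: pw_gen.
split; first by split => //; exists b.
exists [set x | x \in g x], (~: [set x | x \in g x]).
split; first exact: setICr.
split; first exact: setUCr.
split.
  have [w Hw _] := Key b; apply/set0Pn; exists w; by rewrite inE.
split.
  move=> x; rewrite inE => Hx; apply/subsetP => z; rewrite !inE.
  by case/orP => /eqP->.
split.
  by move=> x _; rewrite sub1set.
by move=> y; have [x Hx Hy] := Key y; exists x; rewrite ?inE.
Qed.
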